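(* Let $m,n$ be integers with $|m|=|n|\ge2$. Then $\mathrm{BS}(m,n)$ has no primitive transitive action of infinite phenotype.
   Context: $\mathrm{BS}(m,n)=\langle b,t\mid tb^mt^{-1}=b^n\rangle$; right actions. A transitive action with point stabilizer $\Lambda$ has infinite phenotype iff $[\langle b\rangle:\langle b\rangle\cap\Lambda]=\infty$, i.e. iff $b$ acts freely (all $b$-orbits are infinite). An action is primitive if it preserves no equivalence relation other than equality and the full relation. *)

(* Defs.v *)
(* An action of BS(m,n) = <b,t | t b^m t^-1 = b^n> on a type X
   is given by the bijections x |-> x.b and x |-> x.t (right action), with
   explicit inverses. *)
From Stdlib Require Import ZArith Relations.
Open Scope Z_scope.

Definition zpow {X : Type} (f finv : X -> X) (k : Z) : X -> X :=
  if (0 <=? k)%Z then Nat.iter (Z.to_nat k) f else Nat.iter (Z.to_nat (- k)) finv.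

Definition BS_action (m n : Z) (X : Type) (b bi t ti : X -> X) : Prop :=
  (forall x, bi (b x) = x) /\ (forall x, b (bi x) = x) /\
  (forall x, ti (t x) = x) /\ (forall x, t (ti x) = x) /\
  (* right action: x.(t b^m t^-1) = x.b^n *)
  (forall x, ti (zpow b bi m (t x)) = zpow b bi n x).

Definition gen_step {X : Type} (b bi t ti : X -> X) (x y : X) : Prop :=
  y = b x \/ y = bi x \/ y = t x \/ y = ti x.

Definition transitive_action {X : Type} (b bi t ti : X -> X) : Prop :=
  inhabited X /\
  forall x y : X, clos_refl_trans X (gen_step b bi t ti) x y.

Definition primitive_action {X : Type} (b bi t ti : X -> X) : Prop :=
  forall R : X -> X -> Prop,
    equivalence X R ->
    (forall x y, R x y -> R (b x) (b y) /\ R (bi x) (bi y)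
                         /\ R (t x) (t y) /\ R (ti x) (ti y)) ->
    (forall x y, R x y -> x = y) \/ (forall x y, R x y).

(* infinite phenotype: b acts freely, i.e. all b-orbits are infinite *)
Definition infinite_phenotype {X : Type} (b : X -> X) : Prop :=
  forall (x : X) (k : nat), (0 < k)%nat -> Nat.iter k b x <> x.

(* Main.v *)
Require Import Defs.
From Stdlib Require Import ZArith Relations Lia.
Open Scope Z_scope.

Lemma it_add {X} (P : X -> X) (a c : nat) x :
  Nat.iter (a + c) P x = Nat.iter a P (Nat.iter c P x).
Proof. induction a; simpl; congruence. Qed.

Lemma it_comm {X} (f P Q : X -> X) :
  (forall x, f (P x) = Q (f x)) -> forall i x, f (Nat.iter i P x) = Nat.iter i Q (f x).
Proof. intros H i; induction i; intros x; simpl; [reflexivity|]. rewrite H, IHi; auto. Qed.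

Lemma it_inv {X} (P Pi : X -> X) :
  (forall x, P (Pi x) = x) -> forall i x, Nat.iter i P (Nat.iter i Pi x) = x.
Proof.
  intros H i; induction i; intros x; [reflexivity|].
  change (Nat.iter (S i) Pi x) with (Pi (Nat.iter i Pi x)).
  replace (S i) with (i + 1)%nat by lia. rewrite it_add. simpl. rewrite H. auto.
Qed.

Lemma it_mul {X} (P : X -> X) (i K : nat) x :
  Nat.iter i (Nat.iter K P) x = Nat.iter (i * K) P x.
Proof. induction i; simpl; [reflexivity|]. rewrite it_add, IHi. reflexivity. Qed.

Definition RR {X} (P : X -> X) (x y : X) := exists i j : nat, Nat.iter i P x = Nat.iter j P y.

Lemma RR_swap {X} (P Pi : X -> X) : (forall x, Pi (P x) = x) ->
  forall x y, RR P x y -> RR Pi x y.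
Proof.
  intros H x y [i [j E]]. exists j, i.
  assert (E2 := f_equal (Nat.iter (j + i) Pi) E).
  rewrite it_add, (it_inv Pi P H) in E2.
  rewrite Nat.add_comm, it_add, (it_inv Pi P H) in E2. auto.
Qed.

Lemma RR_map {X} (f P Q : X -> X) : (forall x, f (P x) = Q (f x)) ->
  forall x y, RR P x y -> RR Q (f x) (f y).
Proof.
  intros H x y [i [j E]]. exists i, j.
  rewrite <- !(it_comm f P Q H). congruence.
Qed.

Lemma RR_equiv {X} (P : X -> X) : equivalence X (RR P).
Proof.
  split.
  - intros x. exists 0%nat, 0%nat. reflexivity.
  - intros x y z [i [j E]] [i' [j' E']]. exists (i' + i)%nat, (j + j')%nat.
    rewrite it_add, E, <- it_add, Nat.add_comm, it_add, E', <- it_add. reflexivity.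
  - intros x y [i [j E]]. exists j, i. auto.
Qed.

Lemma zpow_cases {X} (b bi : X -> X) (m : Z) :
  (forall x, zpow b bi m x = Nat.iter (Z.to_nat (Z.abs m)) b x) \/
  (forall x, zpow b bi m x = Nat.iter (Z.to_nat (Z.abs m)) bi x).
Proof.
  unfold zpow. destruct (0 <=? m) eqn:E.
  - left. intros x. rewrite Z.abs_eq; [reflexivity|]. apply Z.leb_le; auto.
  - right. intros x. rewrite Z.abs_neq; [reflexivity|]. apply Z.leb_gt in E. lia.
Qed.

Lemma free_cancel {X} (b : X -> X) (hf : forall (x : X) (k : nat), (0 < k)%nat -> Nat.iter k b x <> x) :
  forall p q x, Nat.iter p b x = Nat.iter q b x -> p = q.
Proof.
  assert (forall p q x, (p < q)%nat -> Nat.iter p b x <> Nat.iter q b x).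
  { intros p q x Hpq E. apply (hf (Nat.iter p b x) (q - p)%nat); [lia|].
    rewrite <- it_add. replace (q - p + p)%nat with q by lia. auto. }
  intros p q x E. destruct (Nat.lt_trichotomy p q) as [h|[h|h]]; auto.
  - exfalso; eapply H; eauto.
  - exfalso; eapply H; eauto.
Qed.

Theorem mainTheorem16 (m n : Z) (hmn : Z.abs m = Z.abs n) (h2 : 2 <= Z.abs m)
  (X : Type) (b bi t ti : X -> X) (hact : BS_action m n X b bi t ti) :
  ~ (transitive_action b bi t ti /\ primitive_action b bi t ti
     /\ infinite_phenotype b).
Proof.
  intros [[[x0] _] [hp hf]].
  destruct hact as [h1 [h2' [h3 [h4 h5]]]].
  set (K := Z.to_nat (Z.abs m)).
  assert (HK : (2 <= K)%nat) by lia.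
  set (B := Nat.iter K b). set (Bi := Nat.iter K bi).
  assert (BBi : forall x, B (Bi x) = x) by (intro; apply it_inv; auto).
  assert (BiB : forall x, Bi (B x) = x) by (intro; apply it_inv; auto).
  assert (Hn : Z.to_nat (Z.abs n) = K) by (unfold K; rewrite hmn; reflexivity).
  assert (Ht : forall x, zpow b bi m (t x) = t (zpow b bi n x)).
  { intro x. rewrite <- h5, h4. reflexivity. }
  assert (Hti : forall x, ti (zpow b bi m x) = zpow b bi n (ti x)).
  { intro x. rewrite <- h5, h4. reflexivity. }
  assert (Gen : forall f : X -> X, forall P Q : X -> X,
     (P = B \/ P = Bi) -> (Q = B \/ Q = Bi) -> (forall x, f (P x) = Q (f x)) ->
     forall x y, RR B x y -> RR B (f x) (f y)).
  { intros f P Q HP HQ H x y R.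
    assert (RP : RR P x y) by (destruct HP; subst; [auto| apply (RR_swap B Bi BiB); auto]).
    assert (RQ := RR_map f P Q H x y RP).
    destruct HQ; subst; [auto| apply (RR_swap Bi B BBi); auto]. }
  assert (Zc : forall z, Z.to_nat (Z.abs z) = K ->
     (forall x, zpow b bi z x = B x) \/ (forall x, zpow b bi z x = Bi x)).
  { intros z hz. destruct (zpow_cases b bi z) as [H|H]; rewrite hz in H; auto. }
  assert (Pm : exists P, (P = B \/ P = Bi) /\ forall x, zpow b bi m x = P x).
  { destruct (Zc m eq_refl) as [H|H]; [exists B|exists Bi]; split; auto. }
  assert (Pn : exists P, (P = B \/ P = Bi) /\ forall x, zpow b bi n x = P x).
  { destruct (Zc n Hn) as [H|H]; [exists B|exists Bi]; split; auto. }
  destruct Pm as [PM [HPM EM]]. destruct Pn as [PN [HPN EN]].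
  destruct (hp (RR B) (RR_equiv B)) as [Triv|Full].
  - intros x y R. repeat split.
    + apply (Gen b B B); auto. intro; unfold B. rewrite <- it_comm with (P := b); auto.
    + apply (Gen bi B B); auto. intro; unfold B.
      apply it_comm. intro; rewrite h1, h2'; auto.
    + apply (Gen t PN PM); auto. intro z. rewrite <- EM, <- EN. auto.
    + apply (Gen ti PM PN); auto. intro z. rewrite <- EM, <- EN. auto.
  - apply (hf x0 K); [lia|]. symmetry. apply Triv. exists 1%nat, 0%nat. reflexivity.
  - destruct (Full x0 (b x0)) as [i [j E]].
    unfold B in E. rewrite !it_mul in E.
    replace (b x0) with (Nat.iter 1 b x0) in E by reflexivity.
    rewrite <- it_add in E. apply (free_cancel b hf) in E. clearbody K. clear -E HK. destruct (Nat.le_gt_cases i j); nia.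
Qed.
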